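(* Let $n,m\ge1$. An abstract simplicial complex $\mathcal I$ on the vertex set $\Omega$ is affinely implementable (i.e. $\mathcal I=\mathcal I(f)$ for some affine maximizer $f$) if and only if there is a regular subdivision $\mathcal S$ of $(\Delta_{n-1})^m$ such that $F$ is a facet of $\mathcal I$ if and only if $F$ is the vertex set of a maximal cell of $\mathcal S$.
   Context: There are $n$ players and $m$ items. The allocation space is $\Omega=\{A\in\{0,1\}^{n\times m}:\sum_{i\in[n]}A_{i,j}=1\ \forall j\in[m]\}$; row $A_i$ is the bundle of player $i$. $\Omega$ is identified with the vertex set of the product $(\Delta_{n-1})^m$ of $m$ copies of the $(n-1)$-dimensional standard simplex (each column of $A$ being a vertex of $\Delta_{n-1}$). Types: $\theta=(\theta_1,\dots,\theta_n)$ with $\theta_i\in\mathbb R^m$. An allocation function $f:\mathbb R^{n\times m}\to\Omega$ is an affine maximizer if there are nonzero player weights $w_1,\dots,w_n$ and allocation weights $c_A\in\mathbb R$ ($A\in\Omega$) with $f(\theta)\in\arg\max_{A\in\Omega}\{c_A+\sum_i w_i\,\theta_i\cdot A_i\}$ for all $\theta$. Difference sets $Q_A=\mathrm{cl}\{\theta:f(\theta)=A\}$; indifference complex $\mathcal I(f)=\{\mathcal O\subseteq\Omega:\bigcap_{A\in\mathcal O}Q_A\ne\emptyset\}$. Regular subdivision of a finite point set $U$: project the upper faces (outer normal with positive last coordinate) of $\mathrm{conv}\{(u,\lambda(u)):u\in U\}$ for a height function $\lambda:U\to\mathbb R$. *)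

(* Defs.v *)
From HB Require Import structures.
From mathcomp Require Import all_boot all_order all_algebra.
From mathcomp Require Import reals.
Set Implicit Arguments. Unset Strict Implicit. Unset Printing Implicit Defensive.
Import Order.TTheory GRing.Theory Num.Theory.
Local Open Scope ring_scope.

(* An allocation A in Omega is encoded by the map item j |-> the unique
   player i with A_{i,j} = 1.  [allocMx A] is the 0/1 matrix in R^{n x m}
   (rows = players, columns = items), i.e. the corresponding vertex of
   (Delta_{n-1})^m. *)
Definition alloc (n m : nat) := {ffun 'I_m -> 'I_n}.

Definition allocMx (R : realType) (n m : nat) (A : alloc n m) : 'M[R]_(n, m) :=
  \matrix_(i < n, j < m) (A j == i)%:R.

Definition mdot (R : realType) (n m : nat) (a : 'M[R]_(n, m)) (A : alloc n m) : R :=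
  \sum_(i < n) \sum_(j < m) a i j * allocMx R A i j.

Definition amValue (R : realType) (n m : nat) (w : 'I_n -> R) (c : alloc n m -> R)
  (theta : 'M[R]_(n, m)) (A : alloc n m) : R :=
  c A + \sum_(i < n) w i * (\sum_(j < m) theta i j * allocMx R A i j).

Definition affine_maximizer (R : realType) (n m : nat)
  (f : 'M[R]_(n, m) -> alloc n m) : Prop :=
  exists (w : 'I_n -> R) (c : alloc n m -> R),
    (forall i, w i != 0) /\
    forall theta (B : alloc n m), amValue w c theta B <= amValue w c theta (f theta).

(* Topological closure in R^{n x m} (sup-norm balls; same topology as Euclidean). *)
Definition in_closure (R : realType) (n m : nat) (S : 'M[R]_(n, m) -> Prop)
  (x : 'M[R]_(n, m)) : Prop :=
  forall eps : R, 0 < eps ->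
    exists y, S y /\ forall i j, `|x i j - y i j| < eps.

Definition diffset (R : realType) (n m : nat) (f : 'M[R]_(n, m) -> alloc n m)
  (A : alloc n m) : 'M[R]_(n, m) -> Prop :=
  in_closure (fun theta => f theta = A).

Definition indiff_complex (R : realType) (n m : nat) (f : 'M[R]_(n, m) -> alloc n m)
  (O : {set alloc n m}) : Prop :=
  exists theta, forall A, A \in O -> diffset f A theta.

Definition simplicial_complex (n m : nat) (K : {set {set alloc n m}}) : Prop :=
  forall F G : {set alloc n m}, F \in K -> G \subset F -> G \in K.

Definition facet (n m : nat) (K : {set {set alloc n m}}) (F : {set alloc n m}) : Prop :=
  F \in K /\ forall G, G \in K -> F \subset G -> G = F.

Definition affinely_implementable (R : realType) (n m : nat)
  (K : {set {set alloc n m}}) : Prop :=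
  exists f : 'M[R]_(n, m) -> alloc n m,
    affine_maximizer f /\ forall O, O \in K <-> indiff_complex f O.

(* Regular subdivision of the point set Omega (vertices of (Delta_{n-1})^m)
   with height function lambda.  A cell is recorded by its vertex set: the
   points u of Omega whose lift (u, lambda u) lies on the upper face of
   conv{(u, lambda u)} with outer normal (a, b), b > 0, i.e. the maximizers of
   <a, u> + b * lambda u.  (Every point of Omega is a vertex of the product of
   simplices, so this is exactly the vertex set of the projected face.) *)
Definition reg_cell (R : realType) (n m : nat) (lambda : alloc n m -> R)
  (C : {set alloc n m}) : Prop :=
  exists (a : 'M[R]_(n, m)) (b : R), 0 < b /\
    C = [set u | [forall v, mdot a v + b * lambda v <= mdot a u + b * lambda u]].

Definition reg_maximal_cell (R : realType) (n m : nat) (lambda : alloc n m -> R)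
  (C : {set alloc n m}) : Prop :=
  reg_cell lambda C /\ forall C', reg_cell lambda C' -> C \subset C' -> C' = C.

(* Main.v *)
Require Import Defs.
From HB Require Import structures.
From mathcomp Require Import all_boot all_order all_algebra.
From mathcomp Require Import reals ring lra zify.
From Stdlib Require Classical_Prop.
Set Implicit Arguments. Unset Strict Implicit. Unset Printing Implicit Defensive.
Import Order.TTheory GRing.Theory Num.Theory.
Local Open Scope ring_scope.

Definition lin (R : realType) (n m : nat) (w : 'I_n -> R) (F : 'I_n -> 'I_m -> R) :=
  \sum_(i < n) w i * \sum_(j < m) F i j.

Lemma linB (R : realType) (n m : nat) (w : 'I_n -> R) (F G : 'I_n -> 'I_m -> R) :
  lin w F - lin w G = lin w (fun i j => F i j - G i j).
Proof.
rewrite /lin -sumrB; apply: eq_bigr => i _; by rewrite -mulrBr -sumrB.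
Qed.

Lemma linD (R : realType) (n m : nat) (w : 'I_n -> R) (F G : 'I_n -> 'I_m -> R) :
  lin w F + lin w G = lin w (fun i j => F i j + G i j).
Proof.
rewrite /lin -big_split /=; apply: eq_bigr => i _; by rewrite big_split mulrDr.
Qed.

Lemma linZ (R : realType) (n m : nat) (w : 'I_n -> R) (t : R) (F : 'I_n -> 'I_m -> R) :
  t * lin w F = lin w (fun i j => t * F i j).
Proof.
rewrite /lin mulr_sumr; apply: eq_bigr => i _; by rewrite mulrCA mulr_sumr.
Qed.

Lemma lin_ext (R : realType) (n m : nat) (w : 'I_n -> R) (F G : 'I_n -> 'I_m -> R) :
  (forall i j, F i j = G i j) -> lin w F = lin w G.
Proof. by move=> h; apply: eq_bigr => i _; congr (_ * _); apply: eq_bigr. Qed.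

Lemma amV (R : realType) (n m : nat) (w : 'I_n -> R) (c : alloc n m -> R) (th : 'M[R]_(n,m)) (A : alloc n m) :
  amValue w c th A = c A + lin w (fun i j => th i j * allocMx R A i j).
Proof. by []. Qed.

Lemma le_sum1 (R : realType) (I : finType) (F : I -> R) i0 :
  (forall i, 0 <= F i) -> F i0 <= \sum_i F i.
Proof. by move=> h; rewrite (bigD1 i0) //= lerDl sumr_ge0. Qed.

Lemma am_affine (R : realType) (n m : nat) (w : 'I_n -> R) (c : alloc n m -> R) (th ts : 'M[R]_(n, m)) (t : R) A :
  amValue w c (th + t *: (ts - th)) A =
  amValue w c th A + t * (amValue w c ts A - amValue w c th A).
Proof.
rewrite !amV.
have -> : c A + lin w (fun i j => ts i j * allocMx R A i j) -
   (c A + lin w (fun i j => th i j * allocMx R A i j)) =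
   lin w (fun i j => ts i j * allocMx R A i j) - lin w (fun i j => th i j * allocMx R A i j) by ring.
rewrite linB linZ -addrA linD; congr (_ + _); apply: lin_ext => i j.
rewrite !mxE; ring.
Qed.

Lemma lin_ts (R : realType) (n m : nat) (w : 'I_n -> R) (hw : forall i, w i != 0)
  (N : R) (A B : alloc n m) :
  lin w (fun i j => (\matrix_(i0, j0) ((A j0 == i0)%:R * N / w i0) : 'M[R]_(n, m)) i j
                     * allocMx R B i j)
  = N * \sum_(j < m) (A j == B j)%:R.
Proof.
rewrite /lin.
have -> : \sum_(i < n) w i * \sum_(j < m) ((\matrix_(i0, j0) ((A j0 == i0)%:R * N / w i0) : 'M[R]_(n, m)) i j * allocMx R B i j)
  = \sum_(i < n) \sum_(j < m) (N * ((A j == i)%:R * (B j == i)%:R)).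
  apply: eq_bigr => i _; rewrite mulr_sumr; apply: eq_bigr => j _.
  rewrite !mxE; have := hw i; move: (w i) => x hx. field. done.
rewrite exchange_big /= mulr_sumr; apply: eq_bigr => j _.
rewrite -mulr_sumr; congr (_ * _).
rewrite (bigD1 (A j)) //= eqxx mul1r big1 ?addr0; first by rewrite eq_sym.
by move=> i /negbTE hi; rewrite eq_sym hi mul0r.
Qed.

Lemma strict_pt (R : realType) (n m : nat) (w : 'I_n -> R) (hw : forall i, w i != 0)
  (c : alloc n m -> R) (A : alloc n m) :
  exists ts : 'M[R]_(n, m), forall B, B != A -> amValue w c ts B < amValue w c ts A.
Proof.
pose N : R := 1 + \sum_B `|c B - c A|.
exists (\matrix_(i0, j0) ((A j0 == i0)%:R * N / w i0)) => B hB.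
rewrite !amV !lin_ts //.
have [j0 hj0] : exists j0, A j0 != B j0.
  case: (pickP (fun j => A j != B j)) => [j0 hj0 | h]; first by exists j0.
  case/eqP: hB; apply/ffunP => j; have := h j; by move/negbFE/eqP.
have h1 : 1 <= \sum_(j < m) (A j == A j)%:R - \sum_(j < m) (A j == B j)%:R :> R.
  rewrite -sumrB (bigD1 j0) //= eqxx (negbTE hj0) subr0 lerDl sumr_ge0 // => j _.
  by rewrite eqxx; case: (_ == _); rewrite ?subrr ?subr0.
have h2 : c B - c A <= N - 1.
  have -> : N - 1 = \sum_B `|c B - c A| by rewrite /N addrAC subrr add0r.
  apply: le_trans (ler_norm _) _.
  by rewrite (bigD1 B) //= lerDl sumr_ge0.
have h3 : 1 <= N by rewrite /N lerDl sumr_ge0.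
move: h1 h2 h3; set SA := \sum_(j < m) _; set SB := \sum_(j < m) _; move=> h1 h2 h3.
nra.
Qed.

Definition Mset (R : realType) (n m : nat) (w : 'I_n -> R) (c : alloc n m -> R)
  (th : 'M[R]_(n, m)) : {set alloc n m} :=
  [set A | [forall B, amValue w c th B <= amValue w c th A]].

Lemma entry_le (R : realType) (n m : nat) (d : 'M[R]_(n, m)) i j :
  `|d i j| <= \sum_(i0 < n) \sum_(j0 < m) `|d i0 j0|.
Proof.
apply: (@le_trans _ _ (\sum_(j0 < m) `|d i j0|)).
  by rewrite (bigD1 j) //= lerDl sumr_ge0.
by rewrite (bigD1 i) //= lerDl sumr_ge0 // => i0 _; rewrite sumr_ge0.
Qed.

Lemma in_diff (R : realType) (n m : nat) (w : 'I_n -> R) (hw : forall i, w i != 0)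
  (c : alloc n m -> R) (f : 'M[R]_(n, m) -> alloc n m)
  (hf : forall th B, amValue w c th B <= amValue w c th (f th)) A th :
  A \in Mset w c th -> diffset f A th.
Proof.
move=> hA eps he.
have [ts hts] := strict_pt hw c A.
pose D : R := 1 + \sum_(i0 < n) \sum_(j0 < m) `|(ts - th) i0 j0|.
have hD : 1 <= D by rewrite /D lerDl; do 2!(apply: sumr_ge0 => ? _).
have hDe : 0 < D + eps by lra.
pose t := eps / (D + eps).
have ht : t * (D + eps) = eps by rewrite /t divfK // gt_eqF.
have ht0 : 0 < t by rewrite /t divr_gt0.
have ht1 : t < 1 by nra.
exists (th + t *: (ts - th)); split.
  apply/eqP; apply: contraT => hne.
  have h1 := hf (th + t *: (ts - th)) A.
  rewrite !am_affine in h1.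
  have h2 := hts _ hne.
  move: hA; rewrite inE => /forallP /(_ (f (th + t *: (ts - th)))) h3.
  move: h1 h2 h3.
  set a1 := amValue w c th (f _); set a2 := amValue w c ts (f _).
  set b1 := amValue w c th A; set b2 := amValue w c ts A.
  move=> h1 h2 h3; nra.
move=> i j.
have hd := entry_le (ts - th) i j.
have -> : th i j - (th + t *: (ts - th)) i j = - (t * (ts - th) i j)
  by rewrite !mxE; ring.
rewrite normrN normrM (gtr0_norm ht0).
have : `|(ts - th) i j| <= D by rewrite /D; lra.
nra.
Qed.

Lemma lin_bound (R : realType) (n m : nat) (w : 'I_n -> R) (G : 'I_n -> 'I_m -> R) (e : R) :
  (forall i j, `|G i j| <= e) ->
  lin w G <= (\sum_(i < n) \sum_(j < m) `|w i|) * e.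
Proof.
move=> hG; rewrite /lin mulr_suml; apply: ler_sum => i _.
rewrite mulr_sumr mulr_suml; apply: ler_sum => j _.
apply: le_trans (ler_norm _) _; rewrite normrM ler_wpM2l //.
Qed.

Lemma diff_in (R : realType) (n m : nat) (w : 'I_n -> R)
  (c : alloc n m -> R) (f : 'M[R]_(n, m) -> alloc n m)
  (hf : forall th B, amValue w c th B <= amValue w c th (f th)) A th :
  diffset f A th -> A \in Mset w c th.
Proof.
move=> hd; rewrite inE; apply/forallP => B; rewrite leNgt; apply/negP => hlt.
pose S : R := \sum_(i < n) \sum_(j < m) `|w i|.
have hS : 0 <= S by do 2!(apply: sumr_ge0 => ? _).
pose d := amValue w c th B - amValue w c th A.
have hd0 : 0 < d by rewrite /d subr_gt0.
pose eps := d / (S + 1).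
have hS1 : 0 < S + 1 by lra.
have he : eps * (S + 1) = d by rewrite /eps divfK // gt_eqF.
have he0 : 0 < eps by rewrite /eps divr_gt0.
have [y [hy hdist]] := hd eps he0.
have hyle := hf y B; rewrite hy in hyle.
have hexp : d - (amValue w c y B - amValue w c y A) =
  lin w (fun i j => (th i j - y i j) * (allocMx R B i j - allocMx R A i j)).
  rewrite /d !amV.
  set L1 := lin w _; set L2 := lin w _; set L3 := lin w _; set L4 := lin w _.
  have -> : c B + L1 - (c A + L2) - (c B + L3 - (c A + L4)) = (L1 - L3) - (L2 - L4) by ring.
  rewrite /L1 /L2 /L3 /L4 !linB; apply: lin_ext => i j; ring.
have hb : lin w (fun i j => (th i j - y i j) * (allocMx R B i j - allocMx R A i j)) <= S * eps.
  apply: lin_bound => i j; rewrite normrM -[eps]mulr1.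
  apply: ler_pM => //; first exact: ltW.
  by rewrite !mxE; case: (B j == i); case: (A j == i); rewrite ?subrr ?subr0 ?sub0r ?normrN ?normr0 ?normr1.
rewrite -hexp in hb.
move: hb hyle he; set vB := amValue w c y B; set vA := amValue w c y A => hb hyle he'.
nra.
Qed.

Lemma key_reg (R : realType) (n m : nat) (w : 'I_n -> R) (hw : forall i, w i != 0)
  (c : alloc n m -> R) (a : 'M[R]_(n, m)) (b : R) (hb : 0 < b) v :
  mdot a v + b * c v =
  b * amValue w c (\matrix_(i, j) (a i j / (b * w i))) v.
Proof.
rewrite amV mulrDr addrC; congr (_ + _).
rewrite linZ /lin /mdot; apply: eq_bigr => i _; rewrite mulr_sumr.
apply: eq_bigr => j _; rewrite !mxE.
have := hw i; move: (w i) => x hx; have hb' : b != 0 by rewrite gt_eqF.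
field; by rewrite hx hb'.
Qed.

Lemma key_reg2 (R : realType) (n m : nat) (w : 'I_n -> R)
  (c : alloc n m -> R) (th : 'M[R]_(n, m)) v :
  mdot (\matrix_(i, j) (w i * th i j)) v + 1 * c v = amValue w c th v.
Proof.
rewrite amV mul1r addrC; congr (_ + _).
rewrite /lin /mdot; apply: eq_bigr => i _; rewrite mulr_sumr.
by apply: eq_bigr => j _; rewrite !mxE mulrA.
Qed.

Lemma reg_cell_iff (R : realType) (n m : nat) (w : 'I_n -> R) (hw : forall i, w i != 0)
  (c : alloc n m -> R) (C : {set alloc n m}) :
  reg_cell c C <-> exists th, C = Mset w c th.
Proof.
split.
  move=> [a [b [hb ->]]]; exists (\matrix_(i, j) (a i j / (b * w i))).
  apply/setP => u; rewrite !inE; apply: eq_forallb => v.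
  by rewrite !(key_reg hw) // ler_pM2l.
move=> [th ->]; exists (\matrix_(i, j) (w i * th i j)), 1; split; first exact: ltr01.
apply/setP => u; rewrite !inE; apply: eq_forallb => v.
by rewrite !key_reg2.
Qed.

Lemma exists_maximal (T : finType) (P : {set T} -> Prop) (C : {set T}) :
  P C -> exists F, [/\ P F, C \subset F & forall G, P G -> F \subset G -> G = F].
Proof.
suff H : forall k (C : {set T}), (#|T| - #|C| <= k)%N -> P C ->
  exists F, [/\ P F, C \subset F & forall G, P G -> F \subset G -> G = F].
  by apply: (H _ C (leqnn _)).
elim=> [|k IH] C0 hk hC.
  exists C0; split => // G hG hsub; apply/eqP; rewrite eq_sym eqEcard hsub /=.
  have := max_card G; have := max_card C0; lia.
case: (Classical_Prop.classic (exists G, [/\ P G, C0 \subset G & G <> C0])).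
  move=> [G [hG hsub hne]].
  have hp : C0 \proper G by rewrite properEneq hsub andbT eq_sym; apply/eqP.
  have hc := proper_card hp; have hm := max_card G.
  have [F [hF hGF hmax]] := IH G ltac:(lia) hG.
  exists F; split => //; exact: subset_trans hGF.
move=> hno; exists C0; split => // G hG hsub.
by apply: Classical_Prop.NNPP => hne; apply: hno; exists G.
Qed.

Lemma facets_char (n m : nat) (K : {set {set alloc n m}}) (Cell : {set alloc n m} -> Prop)
  (hM : forall O, O \in K <-> exists C, Cell C /\ O \subset C) (F : {set alloc n m}) :
  facet K F <-> (Cell F /\ forall C', Cell C' -> F \subset C' -> C' = F).
Proof.
split.
  move=> [hF hmax].
  have [C [hC hFC]] := (hM F).1 hF.
  have hCK : C \in K by apply/hM; exists C.
  have eCF := hmax C hCK hFC; subst C.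
  split => // C' hC' hsub; apply: hmax => //; apply/hM; by exists C'.
move=> [hF hmax]; split; first by apply/hM; exists F.
move=> G hG hsub; have [C [hC hGC]] := (hM G).1 hG.
have eCF := hmax C hC (subset_trans hsub hGC); subst C.
by apply/eqP; rewrite eqEsubset hGC hsub.
Qed.

Lemma complex_char (n m : nat) (K : {set {set alloc n m}}) (hK : simplicial_complex K)
  (Cell : {set alloc n m} -> Prop)
  (hF : forall F, facet K F <-> (Cell F /\ forall C', Cell C' -> F \subset C' -> C' = F)) O :
  O \in K <-> exists C, Cell C /\ O \subset C.
Proof.
split.
  move=> hO; have [F [hFK hOF hmax]] := @exists_maximal _ (fun G : {set alloc n m} => is_true (G \in K)) O hO.
  have [hc _] := (hF F).1 (conj hFK hmax).
  by exists F.
move=> [C [hC hOC]].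
have [F [hFc hCF hmax]] := @exists_maximal _ Cell C hC.
have [hFK _] := (hF F).2 (conj hFc hmax).
apply: hK hFK _; exact: subset_trans hOC hCF.
Qed.

Lemma indiff_iff (R : realType) (n m : nat) (w : 'I_n -> R) (hw : forall i, w i != 0)
  (c : alloc n m -> R) (f : 'M[R]_(n, m) -> alloc n m)
  (hf : forall th B, amValue w c th B <= amValue w c th (f th)) O :
  indiff_complex f O <-> exists C, (exists th, C = Mset w c th) /\ O \subset C.
Proof.
split.
  move=> [th h]; exists (Mset w c th); split; first by exists th.
  apply/subsetP => A hA; apply: (diff_in hf); exact: h.
move=> [C [[th ->] hsub]]; exists th => A hA; apply: (in_diff hw hf).
exact: (subsetP hsub).
Qed.

Lemma regmax_iff (R : realType) (n m : nat) (w : 'I_n -> R) (hw : forall i, w i != 0)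
  (c : alloc n m -> R) (F : {set alloc n m}) :
  reg_maximal_cell c F <-> ((exists th, F = Mset w c th) /\
     forall C', (exists th, C' = Mset w c th) -> F \subset C' -> C' = F).
Proof.
split.
  move=> [hF hmax]; split; first exact/(reg_cell_iff hw).
  by move=> C' hC'; apply: hmax; apply/(reg_cell_iff hw).
move=> [hF hmax]; split; first exact/(reg_cell_iff hw).
by move=> C' hC'; apply: hmax; apply/(reg_cell_iff hw).
Qed.

Theorem mainTheorem6 (R : realType) (n m : nat) (hn : (1 <= n)%N) (hm : (1 <= m)%N)
  (K : {set {set alloc n m}}) (hK : simplicial_complex K) :
  affinely_implementable R K <->
  exists lambda : alloc n m -> R,
    forall F : {set alloc n m}, facet K F <-> reg_maximal_cell lambda F.
Proof.
split.
  move=> [f [[w [c [hw hf]]] hKf]]; exists c => F.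
  have hM : forall O, O \in K <-> exists C, (exists th, C = Mset w c th) /\ O \subset C.
    move=> O; exact: iff_trans (hKf O) (indiff_iff hw hf O).
  exact: iff_trans (facets_char hM F) (iff_sym (regmax_iff hw c F)).
move=> [lam hlam].
pose A0 : alloc n m := [ffun _ => Ordinal hn].
pose w : 'I_n -> R := fun _ => 1.
have hw : forall i, w i != 0 by move=> i; exact: oner_neq0.
pose f := fun th : 'M[R]_(n, m) => [arg max_(A > A0) amValue w lam th A]%O.
have hf : forall th B, amValue w lam th B <= amValue w lam th (f th).
  move=> th B; rewrite /f; case: arg_maxP => // i _ H; exact: H.
exists f; split; first by exists w, lam.
move=> O.
have hF : forall F, facet K F <-> ((exists th, F = Mset w lam th) /\
     forall C', (exists th, C' = Mset w lam th) -> F \subset C' -> C' = F).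
  move=> F; exact: iff_trans (hlam F) (regmax_iff hw lam F).
exact: iff_trans (complex_char hK hF O) (iff_sym (indiff_iff hw hf O)).
Qed.
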